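(* Under the setting of the context, if (TS1) holds and $u$ is the solution of problem (P), then $$\int_0^\infty u(x,t)\,\Delta t=\int_0^\infty u(0,t)\,\Delta t=\frac{A\mu_x}{k}\quad\text{for all }x\in\mu_x\mathbb{N}_0.$$
   Context: A time scale $\mathbb{T}$ is a nonempty closed subset of $\mathbb{R}$; here $\min\mathbb{T}=0$ and $\sup\mathbb{T}=+\infty$. $\sigma(t)=\inf\{s\in\mathbb{T}:s>t\}$ is the forward jump and $\mu_t(t)=\sigma(t)-t$ the graininess; $u^{\Delta_t}$ denotes the (Hilger) delta derivative in $t$ and $\int\cdot\,\Delta t$ the delta integral, with $\int_0^\infty=\lim_{T\to\infty}\int_0^T$. Fix $A>0$, $k>0$, $\mu_x>0$, $\Omega=\mu_x\mathbb{Z}\times\mathbb{T}$, $\mu_x\mathbb{N}_0=\{0,\mu_x,2\mu_x,\dots\}$. Problem (P): $u^{\Delta_t}(x,t)+k\frac{u(x,t)-u(x-\mu_x,t)}{\mu_x}=0$ for $(x,t)\in\Omega$, $u(0,0)=A$, $u(x,0)=0$ for $x\ne0$. A solution is $u:\Omega\to\mathbb{R}$ with each $u(x,\cdot)$ delta differentiable on $\mathbb{T}$, satisfying (P), and bounded on $\mu_x\mathbb{Z}\times(\mathbb{T}\cap[0,T_0])$ for every $T_0>0$. Condition (TS1): $1-\frac{k\mu_t(t)}{\mu_x}>0$ for all $t\in\mathbb{T}$. *)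

(* Defs.v *)
From Stdlib Require Import Reals ClassicalEpsilon.
Open Scope R_scope.

Definition is_time_scale (T : R -> Prop) : Prop :=
  (* closed subset of R *)
  (forall x, (forall eps, 0 < eps -> exists y, T y /\ Rabs (y - x) < eps) -> T x)
  /\ T 0 /\ (forall t, T t -> 0 <= t)
  /\ (forall M, exists t, T t /\ M < t).

Definition is_inf (E : R -> Prop) (s : R) : Prop :=
  (forall r, E r -> s <= r) /\ (forall m, (forall r, E r -> m <= r) -> m <= s).

(* forward jump sigma(t) = inf {s in T | s > t} (well defined since T is unbounded above) *)
Definition sigma (T : R -> Prop) (t : R) : R :=
  epsilon (inhabits 0) (fun s => is_inf (fun r => T r /\ t < r) s).

Definition graininess (T : R -> Prop) (t : R) : R := sigma T t - t.

Definition delta_deriv (T : R -> Prop) (f : R -> R) (t D : R) : Prop :=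
  forall eps, 0 < eps -> exists delta, 0 < delta /\
    forall s, T s -> Rabs (t - s) < delta ->
      Rabs (f (sigma T t) - f s - D * (sigma T t - s)) <= eps * Rabs (sigma T t - s).

(* Improper delta integral  int_0^infty f(t) Delta t = I, with
   int_0^b f Delta t := F(b) - F(0) for a delta antiderivative F of f on T,
   and the limit b -> infinity taken along T. *)
Definition delta_integral_0_infty (T : R -> Prop) (f : R -> R) (I : R) : Prop :=
  exists F : R -> R,
    (forall t, T t -> delta_deriv T F t (f t)) /\
    (forall eps, 0 < eps -> exists M, forall b, T b -> M < b ->
        Rabs (F b - F 0 - I) < eps).

Definition in_grid (mux x : R) : Prop := exists n : Z, x = IZR n * mux.

Definition is_solution_P (T : R -> Prop) (A k mux : R) (u : R -> R -> R) : Prop :=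
  (forall x t, in_grid mux x -> T t ->
     delta_deriv T (u x) t (- (k * ((u x t - u (x - mux) t) / mux))))
  /\ u 0 0 = A
  /\ (forall x, in_grid mux x -> x <> 0 -> u x 0 = 0)
  /\ (forall T0, 0 < T0 -> exists M, forall x t, in_grid mux x -> T t -> t <= T0 ->
        Rabs (u x t) <= M).

Definition TS1 (T : R -> Prop) (k mux : R) : Prop :=
  forall t, T t -> 1 - k * graininess T t / mux > 0.

(* Main.v *)
Require Import Defs.
From Stdlib Require Import Reals.
From Stdlib Require Import Lra Lia Classical ClassicalEpsilon.
Open Scope R_scope.
Local Notation sigma := Defs.sigma.

Lemma inf_exists (E : R -> Prop) (t r0 : R) :
  E r0 -> (forall r, E r -> t <= r) -> exists s, is_inf E s.
Proof.
  intros H0 Hb.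
  destruct (completeness (fun x => E (- x))) as [m [Hm1 Hm2]].
  - exists (-t). intros x Hx. specialize (Hb _ Hx). lra.
  - exists (-r0). rewrite Ropp_involutive. exact H0.
  - exists (-m). split.
    + intros r Hr. assert (- r <= m). { apply Hm1. rewrite Ropp_involutive. exact Hr. } lra.
    + intros m' Hm'. assert (m <= - m'). { apply Hm2. intros x Hx. specialize (Hm' _ Hx). lra. } lra.
Qed.

Lemma inf_approx (E : R -> Prop) s : is_inf E s ->
  forall eps, 0 < eps -> exists r, E r /\ r < s + eps.
Proof.
  intros [H1 H2] eps Heps. apply NNPP. intro Hn.
  assert (s + eps <= s). { apply H2. intros r Hr. destruct (Rlt_or_le r (s+eps)) as [h|h]; auto.
    exfalso; apply Hn; eauto. }
  lra.
Qed.

Lemma sigma_spec T t : is_time_scale T -> is_inf (fun r => T r /\ t < r) (sigma T t).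
Proof.
  intros [Hc [H0 [Hpos Hunb]]].
  unfold sigma. apply epsilon_spec.
  destruct (Hunb t) as [r [Hr Hlt]].
  apply (inf_exists _ t r). split; auto. intros x [_ Hx]; lra.
Qed.

Lemma sig_ge T t : is_time_scale T -> t <= sigma T t.
Proof. intros HT. destruct (sigma_spec T t HT) as [_ H]. apply H. intros r [_ Hr]; lra. Qed.

Lemma sig_le T t r : is_time_scale T -> T r -> t < r -> sigma T t <= r.
Proof. intros HT Hr Hlt. destruct (sigma_spec T t HT) as [H _]. apply H; auto. Qed.

Lemma sig_approx T t : is_time_scale T -> forall eps, 0 < eps ->
  exists r, T r /\ t < r /\ r < sigma T t + eps.
Proof. intros HT eps He. destruct (inf_approx _ _ (sigma_spec T t HT) eps He) as [r [[H1 H2] H3]].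
  eauto. Qed.

Lemma sig_in T t : is_time_scale T -> T (sigma T t).
Proof.
  intros HT. pose proof HT as [Hc _]. apply Hc. intros eps He.
  destruct (sig_approx T t HT eps He) as [r [H1 [H2 H3]]].
  pose proof (sig_le T t r HT H1 H2). exists r; split; auto.
  rewrite Rabs_right; lra.
Qed.

Lemma sig_eq T p tau : is_time_scale T -> T tau -> p < tau ->
  (forall r, T r -> p < r -> tau <= r) -> sigma T p = tau.
Proof.
  intros HT Htau Hp Hr. pose proof (sig_le T p tau HT Htau Hp).
  destruct (sigma_spec T p HT) as [_ H2].
  assert (tau <= sigma T p). { apply H2. intros r [h1 h2]; auto. } lra.
Qed.

Lemma le_eps a b : (forall e, 0 < e -> a <= b + e) -> a <= b.
Proof.
  intros H. destruct (Rle_or_lt a b) as [h|h]; auto.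
  specialize (H ((a-b)/2)). lra.
Qed.

Lemma ts_ind (T : R -> Prop) (S : R -> Prop) (t0 : R) :
  is_time_scale T -> T t0 -> S t0 ->
  (forall t, T t -> t0 <= t -> t < sigma T t -> S t -> S (sigma T t)) ->
  (forall t, T t -> t0 <= t -> sigma T t = t -> S t ->
     exists d, 0 < d /\ forall s, T s -> t < s -> s < t + d -> S s) ->
  (forall t, T t -> t0 < t -> (forall s, T s -> t0 <= s -> s < t -> S s) ->
     (forall eps, 0 < eps -> exists s, T s /\ t - eps < s /\ s < t) -> S t) ->
  forall t, T t -> t0 <= t -> S t.
Proof.
  intros HT Ht0 Hi Hii Hiii Hiv.
  apply NNPP. intro Hn.
  assert (Hex : exists t1, T t1 /\ t0 <= t1 /\ ~ S t1).
  { apply NNPP. intro Hn2. apply Hn. intros t Ht Hle. apply NNPP. intro. apply Hn2; eauto. }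
  destruct Hex as [t1 [Ht1 [Hle1 Hn1]]].
  set (E := fun t => T t /\ t0 <= t /\ ~ S t).
  destruct (inf_exists E t0 t1) as [tau Htau].
  { split; auto. } { intros r [_ [h _]]; auto. }
  pose proof Htau as [Hlb Hglb].
  assert (Hge : t0 <= tau). { apply Hglb. intros r [_ [h _]]; auto. }
  assert (H1 : forall s, T s -> t0 <= s -> s < tau -> S s).
  { intros s Hs h1 h2. apply NNPP. intro. assert (tau <= s) by (apply Hlb; split; auto). lra. }
  assert (HTt : T tau).
  { pose proof HT as [Hc _]. apply Hc. intros eps He.
    destruct (inf_approx _ _ Htau eps He) as [r [Hr Hr2]].
    pose proof (Hlb r Hr). destruct Hr as [Hr _]. exists r; split; auto. rewrite Rabs_right; lra. }
  assert (HS : S tau).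
  { destruct (Req_dec tau t0) as [e|ne]. { subst; auto. }
    destruct (classic (forall eps, 0 < eps -> exists s, T s /\ tau - eps < s /\ s < tau)) as [Hld|Hnld].
    - apply Hiv; auto. lra.
    - apply not_all_ex_not in Hnld. destruct Hnld as [eps Heps].
      apply imply_to_and in Heps. destruct Heps as [Heps Hno].
      assert (Hgap : forall s, T s -> s < tau -> s <= tau - eps).
      { intros s Hs h. destruct (Rle_or_lt s (tau-eps)) as [h'|h']; auto. exfalso; apply Hno; eauto. }
      set (G := fun s => T s /\ t0 <= s /\ s < tau).
      destruct (completeness G) as [p [Hp1 Hp2]].
      { exists tau. intros x [_ [_ h]]; lra. }
      { exists t0. split; auto. split; lra. }
      assert (Hpt0 : t0 <= p). { apply Hp1. split; auto. split; lra. }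
      assert (Hpl : p <= tau - eps). { apply Hp2. intros x [h1 [h2 h3]]. apply Hgap; auto. }
      assert (HTp : T p).
      { pose proof HT as [Hc _]. apply Hc. intros eta He.
        apply NNPP. intro Hn3.
        assert (p <= p - eta).
        { apply Hp2. intros x Hx. destruct (Rle_or_lt x (p - eta)) as [h|h]; auto.
          exfalso; apply Hn3. exists x. pose proof (Hp1 x Hx). destruct Hx as [Hx _].
          split; auto. rewrite Rabs_left1; lra. }
        lra. }
      assert (Hsig : sigma T p = tau).
      { apply sig_eq; auto. lra. intros r Hr Hpr.
        destruct (Rle_or_lt tau r) as [h|h]; auto.
        assert (r <= p) by (apply Hp1; split; auto; split; lra). lra. }
      rewrite <- Hsig. apply Hii; auto. lra. apply H1; auto. lra. }
  assert (Hgt : forall e, E e -> tau < e).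
  { intros e He. pose proof (Hlb e He). destruct (Req_dec e tau); [|lra].
    subst. destruct He as [_ [_ h]]. contradiction. }
  destruct (Rle_lt_or_eq_dec _ _ (sig_ge T tau HT)) as [Hrs|Hrd].
  - pose proof (Hii tau HTt Hge Hrs HS) as HSs.
    destruct (inf_approx _ _ Htau (sigma T tau - tau)) as [e [He1 He2]]. lra.
    pose proof (Hgt e He1). destruct He1 as [HTe [_ Hne]].
    pose proof (sig_le T tau e HT HTe H). lra.
  - destruct (Hiii tau HTt Hge (eq_sym Hrd) HS) as [d [Hd Hds]].
    destruct (inf_approx _ _ Htau d Hd) as [e [He1 He2]].
    pose proof (Hgt e He1). destruct He1 as [HTe [_ Hne]]. apply Hne. apply Hds; auto.
Qed.

Lemma dd_sigma T f t D : is_time_scale T -> T t -> delta_deriv T f t D ->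
  f (sigma T t) = f t + D * (sigma T t - t).
Proof.
  intros HT Ht HD. pose proof (sig_ge T t HT).
  set (X := f (sigma T t) - f t - D * (sigma T t - t)).
  assert (Habs : forall eps, 0 < eps -> Rabs X <= eps * (sigma T t - t)).
  { intros eps He. destruct (HD eps He) as [d [Hd Hs]].
    specialize (Hs t Ht). rewrite Rminus_diag, Rabs_R0 in Hs. specialize (Hs Hd).
    rewrite (Rabs_right (sigma T t - t)) in Hs by lra. exact Hs. }
  assert (Rabs X = 0).
  { apply Rle_antisym; [|apply Rabs_pos]. apply le_eps. intros e He.
    specialize (Habs (e / (sigma T t - t + 1))).
    assert (e / (sigma T t - t + 1) * (sigma T t - t) <= e).
    { unfold Rdiv. rewrite Rmult_assoc. rewrite (Rmult_comm (/ _)).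
      assert ((sigma T t - t) * / (sigma T t - t + 1) <= 1).
      { apply (Rmult_le_reg_r (sigma T t - t + 1)). lra.
        rewrite Rmult_assoc, Rinv_l by lra. lra. }
      nra. }
    assert (0 < e / (sigma T t - t + 1)) by (apply Rdiv_lt_0_compat; lra).
    specialize (Habs H1). lra. }
  destruct (Req_dec X 0) as [hx|hx]; [unfold X in hx; lra| apply Rabs_no_R0 in hx; contradiction].
Qed.

Lemma dd_cont T f t D : is_time_scale T -> T t -> delta_deriv T f t D ->
  forall eps, 0 < eps -> exists d, 0 < d /\ forall s, T s -> Rabs (t - s) < d ->
    Rabs (f s - f t) <= eps.
Proof.
  intros HT Ht HD eps He.
  pose proof (sig_ge T t HT) as Hsg. pose proof (dd_sigma T f t D HT Ht HD) as Hfs.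
  set (mu := sigma T t - t). assert (Hmu : 0 <= mu) by (unfold mu; lra).
  set (e1 := eps / (2 * (mu + 1))).
  assert (He1 : 0 < e1) by (unfold e1; apply Rdiv_lt_0_compat; lra).
  destruct (HD e1 He1) as [d [Hd Hs]].
  set (d' := Rmin d (Rmin 1 (eps / (2 * (Rabs D + 1))))).
  assert (Hd2 : 0 < eps / (2 * (Rabs D + 1))) by (apply Rdiv_lt_0_compat; [lra| pose proof (Rabs_pos D); lra]).
  exists d'. split.
  { unfold d'. apply Rmin_glb_lt; auto. apply Rmin_glb_lt; lra. }
  intros s Hs' Hts.
  assert (h1 : Rabs (t - s) < d) by (eapply Rlt_le_trans; [exact Hts| apply Rmin_l]).
  assert (h2 : Rabs (t - s) < 1) by (eapply Rlt_le_trans; [exact Hts| unfold d'; eapply Rle_trans; [apply Rmin_r|apply Rmin_l]]).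
  assert (h3 : Rabs (t - s) < eps / (2 * (Rabs D + 1))) by (eapply Rlt_le_trans; [exact Hts| unfold d'; eapply Rle_trans; [apply Rmin_r|apply Rmin_r]]).
  specialize (Hs s Hs' h1).
  replace (f s - f t) with (D * (s - t) - (f (sigma T t) - f s - D * (sigma T t - s))) by (rewrite Hfs; ring).
  eapply Rle_trans; [apply Rabs_triang|]. rewrite Rabs_Ropp.
  assert (Rabs (sigma T t - s) <= mu + Rabs (t - s)).
  { replace (sigma T t - s) with (mu + (t - s)) by (unfold mu; ring).
    eapply Rle_trans; [apply Rabs_triang|]. rewrite Rabs_right by (unfold mu; lra). lra. }
  assert (A1 : Rabs (D * (s - t)) <= eps / 2).
  { rewrite Rabs_mult. rewrite <- Rabs_Ropp. replace (- (s - t)) with (t - s) by ring.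
    pose proof (Rabs_pos D). pose proof (Rabs_pos (t - s)).
    assert (HH : Rabs D * Rabs (t - s) <= (Rabs D + 1) * (eps / (2 * (Rabs D + 1)))) by nra.
    replace ((Rabs D + 1) * (eps / (2 * (Rabs D + 1)))) with (eps / 2) in HH. rewrite Rabs_Ropp, (Rabs_minus_sym s t). lra. field. lra. }
  assert (A2 : e1 * Rabs (sigma T t - s) <= eps / 2).
  { assert (HH : e1 * Rabs (sigma T t - s) <= e1 * (mu + 1)).
    { apply Rmult_le_compat_l; lra. }
    replace (e1 * (mu + 1)) with (eps / 2) in HH by (unfold e1; field; lra). lra. }
  lra.
Qed.

Lemma dd_dense T f t D : sigma T t = t -> delta_deriv T f t D ->
  forall eps, 0 < eps -> exists d, 0 < d /\ forall s, T s -> Rabs (t - s) < d ->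
    Rabs (f t - f s - D * (t - s)) <= eps * Rabs (t - s).
Proof. intros Hs HD. unfold delta_deriv in HD. rewrite Hs in HD. exact HD. Qed.

Lemma dd_plus T f g t D1 D2 : delta_deriv T f t D1 -> delta_deriv T g t D2 ->
  delta_deriv T (fun x => f x + g x) t (D1 + D2).
Proof.
  intros H1 H2 eps He.
  destruct (H1 (eps/2)) as [d1 [Hd1 Hs1]]. lra.
  destruct (H2 (eps/2)) as [d2 [Hd2 Hs2]]. lra.
  exists (Rmin d1 d2). split. apply Rmin_glb_lt; auto.
  intros s Hs Hts.
  specialize (Hs1 s Hs (Rlt_le_trans _ _ _ Hts (Rmin_l _ _))).
  specialize (Hs2 s Hs (Rlt_le_trans _ _ _ Hts (Rmin_r _ _))).
  replace (f (sigma T t) + g (sigma T t) - (f s + g s) - (D1 + D2) * (sigma T t - s))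
    with ((f (sigma T t) - f s - D1 * (sigma T t - s)) + (g (sigma T t) - g s - D2 * (sigma T t - s))) by ring.
  eapply Rle_trans; [apply Rabs_triang|]. lra.
Qed.

Lemma dd_scal T f t D a : delta_deriv T f t D ->
  delta_deriv T (fun x => a * f x) t (a * D).
Proof.
  intros H eps He.
  assert (0 < Rabs a + 1) by (pose proof (Rabs_pos a); lra).
  destruct (H (eps / (Rabs a + 1))) as [d [Hd Hs]]. apply Rdiv_lt_0_compat; lra.
  exists d. split; auto. intros s Hs' Hts. specialize (Hs s Hs' Hts).
  replace (a * f (sigma T t) - a * f s - a * D * (sigma T t - s))
    with (a * (f (sigma T t) - f s - D * (sigma T t - s))) by ring.
  rewrite Rabs_mult.
  pose proof (Rabs_pos a). pose proof (Rabs_pos (sigma T t - s)).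
  pose proof (Rabs_pos (f (sigma T t) - f s - D * (sigma T t - s))).
  assert (Rabs a * Rabs (f (sigma T t) - f s - D * (sigma T t - s)) <= (Rabs a + 1) * (eps / (Rabs a + 1) * Rabs (sigma T t - s))) by nra.
  replace ((Rabs a + 1) * (eps / (Rabs a + 1) * Rabs (sigma T t - s))) with (eps * Rabs (sigma T t - s)) in H4 by (field; repeat split; lra).
  exact H4.
Qed.

Lemma dd_id T t : delta_deriv T (fun x => x) t 1.
Proof. intros eps He. exists 1. split. lra. intros s _ _.
  replace (sigma T t - s - 1 * (sigma T t - s)) with 0 by ring. rewrite Rabs_R0.
  pose proof (Rabs_pos (sigma T t - s)). nra. Qed.

Lemma dd_const T t a : delta_deriv T (fun _ => a) t 0.
Proof. intros eps He. exists 1. split. lra. intros s _ _.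
  replace (a - a - 0 * (sigma T t - s)) with 0 by ring. rewrite Rabs_R0.
  pose proof (Rabs_pos (sigma T t - s)). nra. Qed.

Lemma dd_ext T f g t D D' : (forall x, f x = g x) -> D = D' -> delta_deriv T f t D -> delta_deriv T g t D'.
Proof. intros Hf HD H eps He. destruct (H eps He) as [d [Hd Hs]]. exists d. split; auto.
  intros s Hs' Hts. rewrite <- !Hf, <- HD. auto. Qed.

Lemma abs_inv a b : Rabs a <= b -> -b <= a /\ a <= b.
Proof. intros H. pose proof (Rle_abs a). pose proof (Rle_abs (-a)). rewrite Rabs_Ropp in H1. lra. Qed.

Lemma ld_le T f t D B : is_time_scale T -> T t -> delta_deriv T f t D ->
  (forall eps, 0 < eps -> exists s, T s /\ t - eps < s /\ s < t /\ f s <= B) -> f t <= B.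
Proof.
  intros HT Ht HD H. apply le_eps. intros e He.
  destruct (dd_cont T f t D HT Ht HD e He) as [d [Hd Hs]].
  destruct (H d Hd) as [s [Hs1 [Hs2 [Hs3 Hs4]]]].
  specialize (Hs s Hs1). assert (Rabs (t - s) < d) by (rewrite Rabs_right; lra).
  specialize (Hs H0). apply abs_inv in Hs. lra.
Qed.

Lemma cont_lt T f t D B : is_time_scale T -> T t -> delta_deriv T f t D -> f t < B ->
  exists d, 0 < d /\ forall s, T s -> Rabs (t - s) < d -> f s <= B.
Proof.
  intros HT Ht HD Hlt. destruct (dd_cont T f t D HT Ht HD (B - f t)) as [d [Hd Hs]]. lra.
  exists d. split; auto. intros s Hs' Hts. specialize (Hs s Hs' Hts). apply abs_inv in Hs. lra.
Qed.

Lemma le_eta a b c : 0 <= c -> (forall eta, 0 < eta -> a <= b + eta * c) -> a <= b.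
Proof.
  intros Hc H. apply le_eps. intros e He.
  specialize (H (e / (c + 1))). assert (0 < e / (c+1)) by (apply Rdiv_lt_0_compat; lra).
  specialize (H H0).
  assert (e / (c + 1) * c <= e).
  { apply (Rmult_le_reg_r (c + 1)). lra.
    replace (e / (c + 1) * c * (c + 1)) with (e * c) by (field; lra). nra. }
  lra.
Qed.

Lemma ts_unb T M : is_time_scale T -> exists t, T t /\ M < t.
Proof. intros [_ [_ [_ H]]]. apply H. Qed.

Lemma ts_pos T t : is_time_scale T -> T t -> 0 <= t.
Proof. intros [_ [_ [H _]]]. apply H. Qed.

Lemma ts_zero T : is_time_scale T -> T 0.
Proof. intros [_ [H _]]. apply H. Qed.

Lemma ld_pick (t t0 : R) (T : R -> Prop) : t0 < t ->
  (forall eps, 0 < eps -> exists s, T s /\ t - eps < s /\ s < t) ->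
  forall eps, 0 < eps -> exists s, T s /\ t - eps < s /\ s < t /\ t0 <= s.
Proof.
  intros Hlt H eps He. destruct (H (Rmin eps (t - t0))) as [s [Hs [h1 h2]]].
  apply Rmin_glb_lt; lra.
  exists s. pose proof (Rmin_l eps (t - t0)). pose proof (Rmin_r eps (t - t0)). repeat split; auto; lra.
Qed.

Lemma mono T phi d t0 : is_time_scale T -> T t0 ->
  (forall t, T t -> t0 <= t -> delta_deriv T phi t (d t)) ->
  (forall t, T t -> t0 <= t -> d t <= 0) ->
  forall t, T t -> t0 <= t -> phi t <= phi t0.
Proof.
  intros HT Ht0 HD Hd t Ht Hle.
  apply (le_eta _ _ (t - t0)). lra. intros eta Heta. revert t Ht Hle.
  apply (ts_ind T (fun t => phi t <= phi t0 + eta * (t - t0)) t0); auto.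
  - lra.
  - intros t Ht Hle Hlt HS. rewrite (dd_sigma T phi t (d t) HT Ht (HD t Ht Hle)).
    pose proof (Hd t Ht Hle).
    assert (d t * (sigma T t - t) <= 0) by (assert (0 <= - d t * (sigma T t - t)) by (apply Rmult_le_pos; lra); lra).
    assert (eta * (t - t0) <= eta * (sigma T t - t0)) by (apply Rmult_le_compat_l; lra). lra.
  - intros t Ht Hle Hs HS. destruct (dd_dense T phi t (d t) Hs (HD t Ht Hle) eta Heta) as [del [Hdel Hs2]].
    exists del. split; auto. intros s Hs' h1 h2.
    assert (Rabs (t - s) < del) by (rewrite Rabs_left1; lra).
    specialize (Hs2 s Hs' H). rewrite (Rabs_left1 (t - s)) in Hs2 by lra. apply abs_inv in Hs2.
    pose proof (Hd t Ht Hle).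
    assert (0 <= - d t * (s - t)) by (apply Rmult_le_pos; lra). lra.
  - intros t Ht Hlt Hprev Hld. apply (ld_le T phi t (d t)); auto. apply HD; auto; lra.
    intros eps He. destruct (ld_pick t t0 T Hlt Hld eps He) as [s [Hs [h1 [h2 h3]]]].
    exists s. repeat split; auto. specialize (Hprev s Hs h3 h2). nra.
Qed.

Lemma decay1 T f g c e t0 : is_time_scale T -> 0 < c -> 0 < e ->
  (forall t, T t -> c * (sigma T t - t) < 1) ->
  (forall t, T t -> delta_deriv T f t (- c * (f t - g t))) ->
  T t0 -> (forall t, T t -> t0 <= t -> g t <= e) ->
  exists t1, forall b, T b -> t1 < b -> f b <= 2 * e.
Proof.
  intros HT Hc He HTS HD Ht0 Hg.
  assert (Ha : exists t1, T t1 /\ t0 <= t1 /\ f t1 <= 2 * e).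
  { apply NNPP. intro Hn.
    assert (Hbig : forall t, T t -> t0 <= t -> f t > 2 * e).
    { intros t Ht Hle. destruct (Rlt_or_le (2*e) (f t)) as [h|h]; auto. exfalso; apply Hn; eauto. }
    set (X := Rabs (f t0) / (c * e)).
    assert (HX : c * e * X = Rabs (f t0)) by (unfold X; field; lra).
    destruct (ts_unb T (t0 + X + 1) HT) as [t [Ht Htl]].
    assert (X >= 0). { unfold X. apply Rle_ge. unfold Rdiv. apply Rmult_le_pos. apply Rabs_pos. apply Rlt_le, Rinv_0_lt_compat. nra. }
    pose proof (mono T (fun x => f x + c * e * x) (fun x => - c * (f x - g x) + c * e * 1) t0 HT Ht0) as Hm.
    assert (Hle : f t + c * e * t <= f t0 + c * e * t0).
    { apply Hm; auto; try lra.
      - intros s Hs _. apply dd_plus. apply HD; auto. apply dd_scal. apply dd_id.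
      - intros s Hs Hle. specialize (Hbig s Hs Hle). specialize (Hg s Hs Hle). nra. }
    specialize (Hbig t Ht ltac:(lra)). pose proof (Rle_abs (f t0)).
    assert (c * e * (t - t0) > c * e * X) by (apply Rmult_gt_compat_l; nra).
    nra. }
  destruct Ha as [t1 [Ht1 [Hle1 Hf1]]].
  exists t1. intros b Hb Hlt.
  revert b Hb Hlt. intros b Hb Hlt. apply Rlt_le in Hlt. revert b Hb Hlt.
  apply (ts_ind T (fun t => f t <= 2 * e) t1); auto.
  - intros t Ht Hle Hlt HS. rewrite (dd_sigma T f t _ HT Ht (HD t Ht)).
    pose proof (HTS t Ht). pose proof (Hg t Ht ltac:(lra)).
    set (m := sigma T t - t) in *. assert (0 < m) by (unfold m; lra).
    assert (0 <= (1 - c * m) * (2 * e - f t)) by (apply Rmult_le_pos; lra).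
    assert (0 <= (c * m) * (e - g t)) by (apply Rmult_le_pos; nra).
    assert (0 <= e * (c * m)) by (apply Rmult_le_pos; nra). nra.
  - intros t Ht Hle Hs HS. destruct (Rle_lt_or_eq_dec _ _ HS) as [Hl|Heq].
    + destruct (cont_lt T f t _ (2*e) HT Ht (HD t Ht) Hl) as [d [Hd Hds]].
      exists d. split; auto. intros s Hs' h1 h2. apply Hds; auto. rewrite Rabs_left1; lra.
    + assert (Hce : 0 < c * e) by nra.
      destruct (dd_dense T f t _ Hs (HD t Ht) (c * e) Hce) as [d [Hd Hds]].
      exists d. split; auto. intros s Hs' h1 h2.
      assert (Rabs (t - s) < d) by (rewrite Rabs_left1; lra).
      specialize (Hds s Hs' H). rewrite (Rabs_left1 (t - s)) in Hds by lra. apply abs_inv in Hds.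
      pose proof (Hg t Ht ltac:(lra)). nra.
  - intros t Ht Hlt Hprev Hld. apply (ld_le T f t _ _ HT Ht (HD t Ht)).
    intros eps He'. destruct (ld_pick t t1 T Hlt Hld eps He') as [s [Hs [h1 [h2 h3]]]].
    exists s. repeat split; auto.
Qed.

Definition tends (T : R -> Prop) (f : R -> R) : Prop :=
  forall eps, 0 < eps -> exists M, forall b, T b -> M < b -> Rabs (f b) < eps.

Lemma decay T f g c : is_time_scale T -> 0 < c ->
  (forall t, T t -> c * (sigma T t - t) < 1) ->
  (forall t, T t -> delta_deriv T f t (- c * (f t - g t))) ->
  tends T g -> tends T f.
Proof.
  intros HT Hc HTS HD Hg eps He.
  destruct (Hg (eps/3)) as [M HM]. lra.
  destruct (ts_unb T M HT) as [t0 [Ht0 HMt]].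
  destruct (decay1 T f g c (eps/3) t0 HT Hc ltac:(lra) HTS HD Ht0) as [t1 Ht1].
  { intros t Ht Hle. specialize (HM t Ht ltac:(lra)). apply Rlt_le in HM. apply abs_inv in HM. lra. }
  destruct (decay1 T (fun x => -1 * f x) (fun x => -1 * g x) c (eps/3) t0 HT Hc ltac:(lra) HTS) as [t2 Ht2]; auto.
  { intros t Ht. eapply dd_ext; [| |apply dd_scal; apply HD; auto]. intros; reflexivity. ring. }
  { intros t Ht Hle. specialize (HM t Ht ltac:(lra)). apply Rlt_le in HM. apply abs_inv in HM. lra. }
  exists (Rmax t1 t2). intros b Hb Hlt.
  pose proof (Rmax_l t1 t2). pose proof (Rmax_r t1 t2).
  specialize (Ht1 b Hb ltac:(lra)). specialize (Ht2 b Hb ltac:(lra)).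
  apply Rabs_def1; lra.
Qed.

Lemma fin_delta (P : nat -> R -> Prop) J :
  (forall j d d', P j d -> 0 < d' -> d' <= d -> P j d') ->
  (forall j, (j < J)%nat -> exists d, 0 < d /\ P j d) ->
  exists d, 0 < d /\ forall j, (j < J)%nat -> P j d.
Proof.
  intros Hm. induction J as [|J IH]; intros H.
  - exists 1. split. lra. intros j Hj. lia.
  - destruct IH as [d1 [Hd1 H1]]. { intros j Hj. apply H. lia. }
    destruct (H J ltac:(lia)) as [d2 [Hd2 H2]].
    exists (Rmin d1 d2). split. apply Rmin_glb_lt; auto.
    intros j Hj. destruct (Nat.eq_dec j J) as [->|Hne].
    + apply (Hm J d2); auto. apply Rmin_glb_lt; auto. apply Rmin_r.
    + apply (Hm j d1); auto. apply H1; lia. apply Rmin_glb_lt; auto. apply Rmin_l.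
Qed.

Lemma exp_grow c t s : t <= s -> 0 <= c -> exp (2*c*t) * (1 + 2*c*(s-t)) <= exp (2*c*s).
Proof.
  intros Hts Hc. replace (2*c*s) with (2*c*t + 2*c*(s-t)) by ring. rewrite exp_plus.
  apply Rmult_le_compat_l. apply Rlt_le, exp_pos. apply exp_ineq1_le.
Qed.

Lemma exp_mono2 c t s : t <= s -> 0 <= c -> exp (2*c*t) <= exp (2*c*s).
Proof.
  intros Hts Hc. pose proof (exp_grow c t s Hts Hc). pose proof (exp_pos (2*c*t)).
  assert (0 <= 2*c*(s-t)) by nra. nra.
Qed.

Lemma uniq1 T c (v : nat -> R -> R) : is_time_scale T -> 0 < c ->
  (forall t, T t -> c * (sigma T t - t) < 1) ->
  (forall j t, T t -> delta_deriv T (v j) t (- c * (v j t - v (S j) t))) ->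
  (forall j, v j 0 = 0) ->
  (forall T0, 0 < T0 -> exists M, forall j t, T t -> t <= T0 -> Rabs (v j t) <= M) ->
  forall j t, T t -> v j t <= 0.
Proof.
  intros HT Hc HTS HD H0 Hb j ts Hts.
  pose proof (ts_pos T ts HT Hts) as Hts0.
  set (T0 := ts + 1).
  destruct (Hb T0 ltac:(unfold T0; lra)) as [M HM].
  assert (Main : forall eps, 0 < eps -> forall t, T t -> 0 <= t ->
    (t <= T0 -> forall j, (/2)^j * v j t <= eps * exp (2*c*t))).
  { intros eps He.
    apply (ts_ind T (fun t => t <= T0 -> forall j, (/2)^j * v j t <= eps * exp (2*c*t)) 0 HT (ts_zero T HT)).
    - intros _ j'. rewrite H0, Rmult_0_r. pose proof (exp_pos (2*c*0)). nra.
    - intros t Ht Hle Hlt HS Hs j'. assert (Hle2 : t <= T0) by lra. specialize (HS Hle2).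
      pose proof (HS j') as Hj. pose proof (HS (S j')) as Hj1. simpl in Hj1.
      rewrite (dd_sigma T (v j') t _ HT Ht (HD j' t Ht)).
      pose proof (HTS t Ht).
      set (m := sigma T t - t) in *. assert (Hm : 0 < m) by (unfold m; lra).
      replace (2 * c * sigma T t) with (2*c*t + 2*c*m) by (unfold m; ring). rewrite exp_plus.
      set (a := (/2)^j') in *. assert (Ha : 0 < a) by (apply pow_lt; lra).
      set (E := eps * exp (2*c*t)) in *.
      assert (HE : 0 < E) by (unfold E; pose proof (exp_pos (2*c*t)); nra).
      pose proof (exp_ineq1_le (2*c*m)).
      replace (a * (v j' t + - c * (v j' t - v (S j') t) * m))
        with ((1 - c*m) * (a * v j' t) + (2*c*m) * (/2 * a * v (S j') t)) by field.
      assert (h1 : (1 - c*m) * (a * v j' t) <= (1 - c*m) * E) by (apply Rmult_le_compat_l; lra).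
      assert (h2 : (2*c*m) * (/2 * a * v (S j') t) <= (2*c*m) * E) by (apply Rmult_le_compat_l; nra).
      assert (h3 : E * (1 + 2*c*m) <= E * exp (2*c*m)) by (apply Rmult_le_compat_l; lra).
      assert (0 <= E * (c * m)) by (apply Rmult_le_pos; nra). replace (eps * (exp (2 * c * t) * exp (2 * c * m))) with (E * exp (2 * c * m)) by (unfold E; ring). lra.
    - intros t Ht Hle Hs HS.
      destruct (Rlt_or_le t T0) as [HtT|HtT].
      2:{ exists 1. split. lra. intros s _ h1 _ h3. lra. }
      specialize (HS (Rlt_le _ _ HtT)).
      assert (HMp : 0 <= Rabs M) by apply Rabs_pos.
      destruct (pow_lt_1_zero (/2) ltac:(rewrite Rabs_right; lra) (eps / (Rabs M + 1)))
        as [J HJ]. apply Rdiv_lt_0_compat; lra.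
      set (P := fun j d => forall s, T s -> t < s -> s < t + d -> s <= T0 ->
                  (/2)^j * v j s <= eps * exp (2*c*s)).
      destruct (fin_delta P J) as [d [Hd HPd]].
      { intros j' d d' HP Hd' Hdd s Hs' h1 h2 h3. apply HP; auto; lra. }
      { intros j' Hj'. unfold P.
        set (a := (/2)^j'). assert (Ha : 0 < a) by (apply pow_lt; lra).
        set (E := eps * exp (2*c*t)).
        assert (HE : 0 < E) by (unfold E; pose proof (exp_pos (2*c*t)); nra).
        pose proof (HS j') as Hj. pose proof (HS (S j')) as Hj1. simpl in Hj1. fold a in Hj, Hj1. fold E in Hj, Hj1.
        destruct (Rle_lt_or_eq_dec _ _ Hj) as [Hl|Heq].
        + destruct (cont_lt T (v j') t _ (E / a) HT Ht (HD j' t Ht)) as [d [Hd Hds]].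
          { apply (Rmult_lt_reg_l a); auto. replace (a * (E / a)) with E by (field; lra). lra. }
          exists d. split; auto. intros s Hs' h1 h2 h3.
          assert (Rabs (t - s) < d) by (rewrite Rabs_left1; lra).
          specialize (Hds s Hs' H).
          assert (a * v j' s <= a * (E / a)) by (apply Rmult_le_compat_l; lra).
          replace (a * (E / a)) with E in H1 by (field; lra).
          pose proof (exp_mono2 c t s ltac:(lra) ltac:(lra)). unfold E in H1. nra.
        + assert (He' : 0 < c * E / a) by (apply Rdiv_lt_0_compat; nra).
          destruct (dd_dense T (v j') t _ Hs (HD j' t Ht) (c * E / a) He') as [d [Hd Hds]].
          exists d. split; auto. intros s Hs' h1 h2 h3.
          assert (Rabs (t - s) < d) by (rewrite Rabs_left1; lra).
          specialize (Hds s Hs' H). rewrite (Rabs_left1 (t - s)) in Hds by lra. apply abs_inv in Hds.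
          destruct Hds as [Hds _].
          assert (Hk : a * (- (c * E / a * - (t - s))) <= a * (v j' t - v j' s - - c * (v j' t - v (S j') t) * (t - s)))
            by (apply Rmult_le_compat_l; lra).
          replace (a * (- (c * E / a * - (t - s)))) with (- (c * E * (s - t))) in Hk by (field; lra).
          replace (a * (v j' t - v j' s - - c * (v j' t - v (S j') t) * (t - s)))
            with (a * v j' t - a * v j' s + c * (a * v j' t) * (t - s) - c * (a * v (S j') t) * (t - s)) in Hk by ring.
          rewrite Heq in Hk.
          assert (Hv1 : c * (a * v (S j') t) * (s - t) <= c * (2 * E) * (s - t)).
          { apply Rmult_le_compat_r. lra. apply Rmult_le_compat_l; lra. }
          pose proof (exp_grow c t s ltac:(lra) ltac:(lra)).
          assert (a * v j' s <= E * (1 + 2 * c * (s - t))) by lra.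
          assert (eps * (exp (2 * c * t) * (1 + 2 * c * (s - t))) <= eps * exp (2 * c * s)) by (apply Rmult_le_compat_l; lra). unfold E in *. lra. }
      exists d. split; auto. intros s Hs' h1 h2 h3 j'.
      destruct (Nat.lt_ge_cases j' J) as [Hlt|Hge].
      + apply (HPd j' Hlt s Hs'); auto.
      + specialize (HJ j' Hge). specialize (HM j' s Hs' h3).
        pose proof (ts_pos T s HT Hs').
        assert (Hpos : 0 < (/2)^j') by (apply pow_lt; lra).
        rewrite Rabs_right in HJ by lra.
        assert ((/2)^j' * v j' s <= (/2)^j' * Rabs M).
        { apply Rmult_le_compat_l. lra. pose proof (Rle_abs (v j' s)). pose proof (Rle_abs M). lra. }
        assert ((/2)^j' * Rabs M <= eps / (Rabs M + 1) * Rabs M) by (apply Rmult_le_compat_r; lra).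
        assert (eps / (Rabs M + 1) * Rabs M <= eps).
        { apply (Rmult_le_reg_r (Rabs M + 1)). lra.
          replace (eps / (Rabs M + 1) * Rabs M * (Rabs M + 1)) with (eps * Rabs M) by (field; lra). nra. }
        pose proof (exp_mono2 c 0 s H ltac:(lra)). rewrite Rmult_0_r, exp_0 in H4. nra.
    - intros t Ht Hlt Hprev Hld HtT j'.
      set (a := (/2)^j'). assert (Ha : 0 < a) by (apply pow_lt; lra).
      assert (v j' t <= eps * exp (2*c*t) / a).
      { apply (ld_le T (v j') t _ _ HT Ht (HD j' t Ht)).
        intros e' He'. destruct (ld_pick t 0 T Hlt Hld e' He') as [s [Hs [h1 [h2 h3]]]].
        exists s. repeat split; auto.
        specialize (Hprev s Hs h3 h2 ltac:(lra) j'). fold a in Hprev.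
        pose proof (exp_mono2 c s t ltac:(lra) ltac:(lra)).
        apply (Rmult_le_reg_l a); auto. replace (a * (eps * exp (2 * c * t) / a)) with (eps * exp (2*c*t)) by (field; lra).
        nra. }
      apply (Rmult_le_compat_l a) in H; [|lra].
      replace (a * (eps * exp (2 * c * t) / a)) with (eps * exp (2*c*t)) in H by (field; lra). exact H. }
  set (a := (/2)^j). assert (Ha : 0 < a) by (apply pow_lt; lra).
  apply (le_eta _ 0 (exp (2*c*ts) / a)).
  { apply Rlt_le, Rdiv_lt_0_compat; auto. apply exp_pos. }
  intros eta Heta. specialize (Main eta Heta ts Hts Hts0 ltac:(unfold T0; lra) j). fold a in Main.
  apply (Rmult_le_reg_l a); auto. replace (a * (0 + eta * (exp (2 * c * ts) / a))) with (eta * exp (2*c*ts)) by (field; lra).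
  exact Main.
Qed.

Lemma tends_sum T (f : nat -> R -> R) : (forall j, tends T (f j)) ->
  forall n, tends T (fun b => sum_f_R0 (fun j => f j b) n).
Proof.
  intros Hf n. induction n as [|n IH].
  - simpl. apply Hf.
  - intros eps He. destruct (IH (eps/2)) as [M1 H1]. lra.
    destruct (Hf (S n) (eps/2)) as [M2 H2]. lra.
    exists (Rmax M1 M2). intros b Hb Hlt. simpl.
    pose proof (Rmax_l M1 M2). pose proof (Rmax_r M1 M2).
    specialize (H1 b Hb ltac:(lra)). specialize (H2 b Hb ltac:(lra)).
    eapply Rle_lt_trans; [apply Rabs_triang|]. lra.
Qed.

Definition W (u : R -> R -> R) (h : R) (z : Z) : R -> R := u (IZR z * h).

Lemma grid_ne z h : z <> 0%Z -> 0 < h -> IZR z * h <> 0.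
Proof. intros Hz Hh. apply Rmult_integral_contrapositive_currified. apply not_0_IZR; auto. lra. Qed.

Lemma main_gen (T : R -> Prop) (A k mux : R) (u : R -> R -> R) :
  is_time_scale T -> 0 < A -> 0 < k -> 0 < mux ->
  TS1 T k mux ->
  is_solution_P T A k mux u ->
  forall n : nat, delta_integral_0_infty T (u (IZR (Z.of_nat n) * mux)) (A * mux / k).
Proof.
  intros HT HA Hk Hh HTS1 [Hsol [Hu0 [Hinit Hbd]]].
  set (c := k / mux). assert (Hc : 0 < c) by (unfold c; apply Rdiv_lt_0_compat; lra).
  assert (HTS : forall t, T t -> c * (sigma T t - t) < 1).
  { intros t Ht. specialize (HTS1 t Ht). unfold graininess in HTS1.
    replace (c * (sigma T t - t)) with (k * (sigma T t - t) / mux) by (unfold c; field; lra). lra. }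
  assert (Heq : forall z t, T t -> delta_deriv T (W u mux z) t (- c * (W u mux z t - W u mux (z - 1) t))).
  { intros z t Ht. assert (Hg : in_grid mux (IZR z * mux)) by (exists z; reflexivity).
    eapply dd_ext; [| |apply (Hsol _ t Hg Ht)]. intros; reflexivity.
    unfold W. rewrite minus_IZR. replace ((IZR z - IZR 1) * mux) with (IZR z * mux - mux) by (simpl; ring).
    unfold c. field. lra. }
  set (v := fun (j : nat) => W u mux (- Z.of_nat j - 1)).
  assert (Hvd : forall j t, T t -> delta_deriv T (v j) t (- c * (v j t - v (S j) t))).
  { intros j t Ht. unfold v. replace (- Z.of_nat (S j) - 1)%Z with (- Z.of_nat j - 1 - 1)%Z by lia. apply Heq; auto. }
  assert (Hv0 : forall j, v j 0 = 0).
  { intros j. unfold v, W. apply Hinit. exists (- Z.of_nat j - 1)%Z. reflexivity. apply grid_ne; auto. lia. }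
  assert (Hvb : forall T0, 0 < T0 -> exists M, forall j t, T t -> t <= T0 -> Rabs (v j t) <= M).
  { intros T0 HT0. destruct (Hbd T0 HT0) as [M HM]. exists M. intros j t Ht Hle. unfold v, W. apply HM; auto.
    exists (- Z.of_nat j - 1)%Z. reflexivity. }
  assert (Hneg : forall j t, T t -> v j t = 0).
  { intros j t Ht. apply Rle_antisym.
    - apply (uniq1 T c v HT Hc HTS Hvd Hv0 Hvb j t Ht).
    - assert (-1 * v j t <= 0).
      { apply (uniq1 T c (fun j t => -1 * v j t) HT Hc HTS); auto.
        + intros j' t' Ht'. eapply dd_ext; [| |apply dd_scal; apply Hvd; auto]. intros; reflexivity. ring.
        + intros j'. rewrite Hv0. ring.
        + intros T0 HT0. destruct (Hvb T0 HT0) as [M HM]. exists M. intros j' t' Ht' Hle.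
          rewrite Rabs_mult. replace (Rabs (-1)) with 1 by (rewrite Rabs_left; lra). rewrite Rmult_1_l. auto. }
      lra. }
  assert (Hm1 : forall t, T t -> W u mux (-1) t = 0).
  { intros t Ht. apply (Hneg 0%nat t Ht). }
  assert (Htend : forall n, tends T (W u mux (Z.of_nat n))).
  { intros n. induction n as [|n IH].
    - apply (decay T _ (W u mux (-1)) c HT Hc HTS).
      + intros t Ht. apply (Heq 0%Z t Ht).
      + intros eps He. exists 0. intros b Hb _. rewrite Hm1 by auto. rewrite Rabs_R0. auto.
    - apply (decay T _ (W u mux (Z.of_nat n)) c HT Hc HTS); auto.
      intros t Ht. replace (Z.of_nat n) with (Z.of_nat (S n) - 1)%Z by lia. apply Heq; auto. }
  set (Sm := fun n t => sum_f_R0 (fun j => W u mux (Z.of_nat j) t) n).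
  assert (HSd : forall n t, T t -> delta_deriv T (Sm n) t (c * (W u mux (-1) t - W u mux (Z.of_nat n) t))).
  { intros n t Ht. induction n as [|n IH].
    - eapply dd_ext; [| |apply (Heq 0%Z t Ht)]. intros; reflexivity. simpl. ring.
    - eapply dd_ext; [| |apply dd_plus; [apply IH| apply (Heq (Z.of_nat (S n)) t Ht)]].
      intros; reflexivity.
      replace (Z.of_nat (S n) - 1)%Z with (Z.of_nat n) by lia. ring. }
  assert (HS0 : forall n, Sm n 0 = A).
  { intros n. induction n as [|n IH].
    - unfold Sm. simpl. unfold W. rewrite Rmult_0_l. exact Hu0.
    - unfold Sm in *. simpl. rewrite IH. unfold W. rewrite Hinit. ring.
      exists (Z.of_nat (S n)). reflexivity. apply grid_ne; auto. lia. }
  intros n.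
  exists (fun t => - / c * Sm n t). split.
  - intros t Ht. eapply dd_ext; [| |apply dd_scal; apply (HSd n t Ht)]. intros; reflexivity.
    rewrite Hm1 by auto. unfold W. field. lra.
  - intros eps He. destruct (tends_sum T (fun j => W u mux (Z.of_nat j)) Htend n (eps * c)) as [M HM].
    apply Rmult_lt_0_compat; lra.
    exists M. intros b Hb Hlt. specialize (HM b Hb Hlt). fold (Sm n b) in HM.
    rewrite HS0.
    replace (- / c * Sm n b - - / c * A - A * mux / k) with (- (Sm n b / c)) by (unfold c; field; lra).
    rewrite Rabs_Ropp. unfold Rdiv. rewrite Rabs_mult, (Rabs_right (/ c)) by (apply Rle_ge, Rlt_le, Rinv_0_lt_compat; lra).
    apply (Rmult_lt_reg_r c); auto. rewrite Rmult_assoc, Rinv_l by lra. lra.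
Qed.

Theorem mainTheorem10 (T : R -> Prop) (A k mux : R) (u : R -> R -> R) :
  is_time_scale T -> 0 < A -> 0 < k -> 0 < mux ->
  TS1 T k mux ->
  is_solution_P T A k mux u ->
  forall n : nat,
    delta_integral_0_infty T (u (INR n * mux)) (A * mux / k) /\
    delta_integral_0_infty T (u 0) (A * mux / k).
Proof.
  intros HT HA Hk Hh HTS1 Hsol n. split.
  - rewrite INR_IZR_INZ. apply main_gen; auto.
  - pose proof (main_gen T A k mux u HT HA Hk Hh HTS1 Hsol 0%nat) as H.
    replace (IZR (Z.of_nat 0) * mux) with 0 in H by (simpl; ring). exact H.
Qed.
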